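(* Let $n\geq 1$ be an integer, let $\mathbb{D}:=\{z\in\mathbb{C}:|z|<1\}$ and $\mathbb{B}_n:=\{(z_1,\dots,z_n)\in\mathbb{C}^n: |z_1|^2+\cdots+|z_n|^2<1\}$, and let $X$ denote either $\mathbb{D}^n$ or $\mathbb{B}_n$. Let $R_n$ be a commutative unital subring of the ring $\mathbb{C}^{X}$ of all complex-valued functions on $X$, with the usual pointwise addition and multiplication. For $f\in R_n$ define the function $Df:\mathbb{D}\to\mathbb{C}$ by $(Df)(z_1):=f(z_1,0,\dots,0)$, and set $DR_n:=\{Df: f\in R_n\}$ (a ring of functions on $\mathbb{D}$ under pointwise operations). For $g\in DR_n$ define $Ug:X\to\mathbb{C}$ by $(Ug)(z_1,\dots,z_n):=g(z_1)$. Suppose that $UDf\in R_n$ for all $f\in R_n$. If $R_n$ is coherent, then $DR_n$ is coherent.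
   Context: A unital commutative ring $R$ is called coherent if the intersection of any two finitely generated ideals of $R$ is finitely generated, and for every $a\in R$ the annihilator $\mathrm{Ann}(a):=\{x\in R: ax=0\}$ is a finitely generated ideal. *)

(* Defs.v *)
From HB Require Import structures.
From mathcomp Require Import all_boot all_order all_algebra.
From mathcomp Require Import complex Rstruct.
From Stdlib Require Import Rdefinitions.
Set Implicit Arguments. Unset Strict Implicit. Unset Printing Implicit Defensive.
Import Order.TTheory GRing.Theory Num.Theory.
Local Open Scope ring_scope.

Definition C : numClosedFieldType := (Rdefinitions.R)[i].

Definition is_subring (T : Type) (S : (T -> C) -> Prop) : Prop :=
  S (fun _ => 1) /\
  (forall f g, S f -> S g -> S (fun t => f t - g t)) /\
  (forall f g, S f -> S g -> S (fun t => f t * g t)).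

Definition in_ideal_gen (T : Type) (S : (T -> C) -> Prop) (k : nat)
    (g : 'I_k -> T -> C) (h : T -> C) : Prop :=
  exists c : 'I_k -> T -> C, (forall i, S (c i)) /\
    forall t, h t = \sum_(i < k) c i t * g i t.

Definition fg_ideal (T : Type) (S : (T -> C) -> Prop) (I : (T -> C) -> Prop)
  : Prop :=
  exists (k : nat) (g : 'I_k -> T -> C), (forall i, S (g i)) /\
    forall h, I h <-> in_ideal_gen S g h.

Definition ann (T : Type) (S : (T -> C) -> Prop) (a : T -> C) : (T -> C) -> Prop :=
  fun x => S x /\ forall t, a t * x t = 0.

Definition coherent (T : Type) (S : (T -> C) -> Prop) : Prop :=
  (forall I J, fg_ideal S I -> fg_ideal S J ->
     fg_ideal S (fun h => I h /\ J h)) /\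
  (forall a, S a -> fg_ideal S (ann S a)).

Inductive domain := Polydisc | Ball.

Definition inX (d : domain) (n : nat) (z : 'I_n.+1 -> C) : bool :=
  match d with
  | Polydisc => [forall i, `|z i| < 1]
  | Ball => \sum_(i < n.+1) `|z i| ^+ 2 < 1
  end.

Definition ptX (d : domain) (n : nat) := {z : 'I_n.+1 -> C | inX d z}.
Definition ptD := {z : C | `|z| < 1}.

Definition e1 (n : nat) (z : C) : 'I_n.+1 -> C :=
  fun i => if i == ord0 then z else 0.

Lemma e1_in (d : domain) (n : nat) (z : ptD) : inX d (@e1 n (val z)).
Proof.
case: z => z /= hz; case: d => /=.
  apply/forallP => i; rewrite /e1; case: (i == ord0) => //.
  by rewrite normr0 ltr01.
rewrite big_ord_recl /e1 eqxx big1 ?addr0; last first.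
  by move=> i _; rewrite eq_sym (negbTE (neq_lift _ _)) normr0 expr0n.
by rewrite expr_lt1 // normr_ge0.
Qed.

Lemma proj_in (d : domain) (n : nat) (x : ptX d n) : `|val x ord0| < 1.
Proof.
case: x => x /=; case: d => /=.
  by move/forallP/(_ ord0).
move=> hx; have h0 : `|x ord0| ^+ 2 < 1.
  apply: le_lt_trans hx; rewrite big_ord_recl lerDl.
  by apply: sumr_ge0 => i _; rewrite exprn_ge0.
by move: h0; rewrite expr_lt1 // normr_ge0.
Qed.

Definition embD (d : domain) (n : nat) (z : ptD) : ptX d n :=
  exist _ (@e1 n (val z)) (e1_in d n z).

Definition projD (d : domain) (n : nat) (x : ptX d n) : ptD :=
  exist _ (val x ord0) (proj_in x).

Definition Dop (d : domain) (n : nat) (f : ptX d n -> C) : ptD -> C :=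
  fun z => f (embD d n z).

Definition Uop (d : domain) (n : nat) (g : ptD -> C) : ptX d n -> C :=
  fun x => g (projD x).

Definition DR (d : domain) (n : nat) (Rn : (ptX d n -> C) -> Prop)
  : (ptD -> C) -> Prop :=
  fun g => exists f, Rn f /\ g = Dop f.

(* Main.v *)
Require Import Defs.
From HB Require Import structures.
From mathcomp Require Import all_boot all_order all_algebra.
From Stdlib Require Import FunctionalExtensionality ClassicalEpsilon.
Set Implicit Arguments. Unset Strict Implicit. Unset Printing Implicit Defensive.
Import Order.TTheory GRing.Theory Num.Theory.
Local Open Scope ring_scope.

Section Aux.
Variable T : Type.
Variable S : (T -> C) -> Prop.
Hypothesis HS : is_subring S.

Lemma S0 : S (fun _ => 0).
Proof.
case: HS => H1 [Hs _].
have := Hs _ _ H1 H1.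
by have -> : (fun _ : T => (1:C) - 1) = (fun _ => 0) by apply: functional_extensionality => t; rewrite subrr.
Qed.

Lemma SD f g : S f -> S g -> S (fun t => f t + g t).
Proof.
case: HS => H1 [Hs _] Hf Hg.
have := Hs _ _ Hf (Hs _ _ S0 Hg) => /=.
by have -> : (fun t => f t - (0 - g t)) = (fun t => f t + g t) by apply: functional_extensionality => t; rewrite sub0r opprK.
Qed.

Lemma Ssum k (F : 'I_k -> T -> C) : (forall i, S (F i)) -> S (fun t => \sum_(i < k) F i t).
Proof.
elim: k F => [|k IH] F HF.
  have -> : (fun t => \sum_(i < 0) F i t) = (fun _ => 0) by apply: functional_extensionality => t; rewrite big_ord0.
  exact: S0.
have -> : (fun t => \sum_(i < k.+1) F i t) = (fun t => F ord0 t + \sum_(i < k) F (lift ord0 i) t).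
  by apply: functional_extensionality => t; rewrite big_ord_recl.
by apply: SD => //; apply: (IH (fun i => F (lift ord0 i))).
Qed.

Lemma in_ideal_ext k (g : 'I_k -> T -> C) h h' :
  (forall t, h t = h' t) -> in_ideal_gen S g h -> in_ideal_gen S g h'.
Proof. by move=> E [c [Hc Hh]]; exists c; split => // t; rewrite -E. Qed.

Lemma gen_ext k (g g' : 'I_k -> T -> C) h :
  (forall i t, g i t = g' i t) -> in_ideal_gen S g h -> in_ideal_gen S g' h.
Proof.
move=> E [c [Hc Hh]]; exists c; split => // t; rewrite Hh.
by apply: eq_bigr => i _; rewrite E.
Qed.

Lemma gen_in k (g : 'I_k -> T -> C) l : in_ideal_gen S g (g l).
Proof.
case: HS => H1 _.
exists (fun i => if i == l then (fun _ => 1) else (fun _ => 0)); split.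
  by move=> i; case: (i == l) => //; apply: S0.
move=> t; rewrite (bigD1 l) // eqxx mul1r big1 /= ?addr0 //.
by move=> i /negbTE ->; rewrite mul0r.
Qed.

Lemma ideal_comb k (g : 'I_k -> T -> C) m (hs c : 'I_m -> T -> C) h :
  (forall l, in_ideal_gen S g (hs l)) -> (forall l, S (c l)) ->
  (forall t, h t = \sum_(l < m) c l t * hs l t) -> in_ideal_gen S g h.
Proof.
move=> Hhs Hc Hh.
pose a l := proj1_sig (constructive_indefinite_description _ (Hhs l)).
have Ha l : (forall i, S (a l i)) /\ (forall t, hs l t = \sum_(i < k) a l i t * g i t).
  exact: (proj2_sig (constructive_indefinite_description _ (Hhs l))).
exists (fun i t => \sum_(l < m) c l t * a l i t); split.
  move=> i; apply: (Ssum (F := fun l t => c l t * a l i t)) => l.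
  by case: HS => _ [_ Hm]; apply: Hm => //; case: (Ha l) => H _; apply: H.
move=> t; rewrite Hh.
under eq_bigr => l _ do rewrite (proj2 (Ha l)) mulr_sumr.
rewrite exchange_big; apply: eq_bigr => i _; rewrite mulr_suml.
by apply: eq_bigr => l _; rewrite mulrA.
Qed.

End Aux.

Lemma comp_ideal T T' (m : T' -> T) (S : (T -> C) -> Prop) (S' : (T' -> C) -> Prop)
  k (g : 'I_k -> T -> C) h :
  (forall c, S c -> S' (fun t => c (m t))) -> in_ideal_gen S g h ->
  in_ideal_gen S' (fun i t => g i (m t)) (fun t => h (m t)).
Proof.
move=> HSS [c [Hc Hh]]; exists (fun i t => c i (m t)); split => [i|t].
  exact: HSS.
exact: Hh.
Qed.

Lemma projD_embD d n z : projD (embD d n z) = z.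
Proof. by apply: val_inj; rewrite /= /e1 eqxx. Qed.

Theorem mainTheorem1 (d : domain) (n : nat) (Rn : (ptX d n -> C) -> Prop) :
  is_subring Rn ->
  (forall f, Rn f -> Rn (Uop (Dop f))) ->
  coherent Rn ->
  coherent (DR Rn).
Proof.
move=> HS HU [Hint Hann].
have HA : forall f, Rn f -> DR Rn (fun t => f (embD d n t)).
  by move=> f Hf; exists f.
have HB : forall g, DR Rn g -> Rn (fun x => g (projD x)).
  by move=> g [f [Hf ->]]; exact: HU.
have DU : forall (g : ptD -> C) t, g t = g (projD (embD d n t)).
  by move=> g t; rewrite projD_embD.
have HS' : is_subring (DR Rn).
  case: HS => H1 [Hs Hm]; split; first by exists (fun _ => 1).
  split => f g [f' [Hf ->]] [g' [Hg ->]].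
    by exists (fun t => f' t - g' t); split; [apply: Hs|].
  by exists (fun t => f' t * g' t); split; [apply: Hm|].
split.
- move=> I J [kI [gI [HgI HI]]] [kJ [gJ [HgJ HJ]]].
  have fI : fg_ideal Rn (in_ideal_gen Rn (fun i x => gI i (projD x))).
    by exists kI, (fun i x => gI i (projD x)); split => // i; apply: HB.
  have fJ : fg_ideal Rn (in_ideal_gen Rn (fun i x => gJ i (projD x))).
    by exists kJ, (fun i x => gJ i (projD x)); split => // i; apply: HB.
  case: (Hint _ _ fI fJ) => k [gk [Hgk Hk]].
  exists k, (fun l t => gk l (embD d n t)); split.
    by move=> l; apply: HA.
  move=> h; split.
  + case=> /HI hI /HJ hJ.
    have := comp_ideal (m := @projD d n) HB hI.
    have := comp_ideal (m := @projD d n) HB hJ.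
    move=> h2 h1.
    have := comp_ideal (m := embD d n) HA (proj1 (Hk _) (conj h1 h2)).
    by apply: in_ideal_ext => t /=; rewrite -DU.
  + move=> Hh.
    have memI : forall l, in_ideal_gen Rn (fun i x => gI i (projD x)) (gk l)
        /\ in_ideal_gen Rn (fun i x => gJ i (projD x)) (gk l).
      by move=> l; apply/Hk; apply: gen_in.
    case: Hh => c [Hc Hh]; split.
    * apply/HI; apply: (ideal_comb HS' (hs := fun l t => gk l (embD d n t)) _ Hc) => //.
      move=> l; have := comp_ideal (m := embD d n) HA (proj1 (memI l)).
      by apply: gen_ext => i t /=; rewrite -DU.
    * apply/HJ; apply: (ideal_comb HS' (hs := fun l t => gk l (embD d n t)) _ Hc) => //.
      move=> l; have := comp_ideal (m := embD d n) HA (proj2 (memI l)).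
      by apply: gen_ext => i t /=; rewrite -DU.
- move=> a Ha.
  case: (Hann _ (HB _ Ha)) => k [gk [Hgk Hk]].
  exists k, (fun l t => gk l (embD d n t)); split.
    by move=> l; apply: HA.
  move=> h; split.
  + case=> Sh Hah.
    have : ann Rn (fun x => a (projD x)) (fun x => h (projD x)).
      by split; [apply: HB | move=> x; apply: Hah].
    move/Hk => H.
    have := comp_ideal (m := embD d n) HA H.
    by apply: in_ideal_ext => t /=; rewrite -DU.
  + move=> Hh.
    have memA : forall l, ann Rn (fun x => a (projD x)) (gk l).
      by move=> l; apply/Hk; apply: gen_in.
    case: Hh => c [Hc Hh].
    pose f := fun l => proj1_sig (constructive_indefinite_description _ (Hc l)).
    have Hf l : Rn (f l) /\ c l = Dop (f l).
      exact: (proj2_sig (constructive_indefinite_description _ (Hc l))).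
    split.
      exists (fun x => \sum_(l < k) f l x * gk l x); split.
        apply: (Ssum HS (F := fun l x => f l x * gk l x)) => l.
        by case: HS => _ [_ Hm]; apply: Hm => //; case: (Hf l).
      apply: functional_extensionality => t; rewrite Hh /Dop.
      by apply: eq_bigr => l _; rewrite (proj2 (Hf l)).
    move=> t; rewrite Hh mulr_sumr big1 // => l _.
    rewrite mulrCA; have := proj2 (memA l) (embD d n t) => /=.
    by rewrite projD_embD => ->; rewrite mulr0.
Qed.
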